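(* Let $\Gamma$ be a semisimple graph structure with transition matrix $M$ of spectral radius $\lambda>1$ and initial vertex $v_0$ of large growth. Let $\rho_i=\lim_n e_i^TM^n\mathbf 1/\lambda^n$, $u_i=\lim_n e_0^TM^ne_i/\lambda^n$, and let $\mathbb P$ be the Markov measure on infinite paths with initial probabilities $\pi_i=u_i\rho_i/\rho_0$ and transition probability $\rho_j/(\lambda\rho_i)$ on each edge from $v_i$ to $v_j$; let $\mathbb P_m$ be the law of the first $m$ edges. For each $n$, choose a path $\gamma$ of length $n$ starting at $v_0$ uniformly at random and let $\tilde\lambda_n$ be the law of its subpath from position $\lfloor\log n\rfloor$ to position $n-\lfloor\log n\rfloor$. Then $\|\mathbb P_{n-2\lfloor\log n\rfloor}-\tilde\lambda_n\|_{TV}\to0$ as $n\to\infty$.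
   Context: $\Gamma$ is a finite directed graph with transition matrix $M$ ($M_{ij}$ the number of edges $v_i\to v_j$), so $e_i^TM^ne_j$ counts paths of length $n$ from $v_i$ to $v_j$; $\mathbf 1$ is the all-ones vector. $M$ is semisimple if every eigenvalue of modulus $\lambda$ has equal geometric and algebraic multiplicity and $\lambda$ is the only eigenvalue of maximal modulus (so $\lim M^n/\lambda^n$ exists). A vertex $v$ has large growth if the number of paths of length $n$ starting at $v$ grows like $\lambda^{n+o(n)}$. *)

(* Defs.v *)
From HB Require Import structures.
From mathcomp Require Import all_boot all_order all_algebra.
From mathcomp Require Import complex.
From mathcomp Require Import all_classical all_reals all_analysis.
Set Implicit Arguments. Unset Strict Implicit. Unset Printing Implicit Defensive.
Import Order.TTheory GRing.Theory Num.Theory numFieldNormedType.Exports.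
Local Open Scope classical_set_scope.
Local Open Scope ring_scope.

(** A finite directed multigraph: vertices 'I_k, a finite type of edges E,
    source and target maps. *)

Definition trans_mx (k : nat) (E : finType) (src tgt : E -> 'I_k) : 'M[nat]_k :=
  \matrix_(i, j) #|[set e : E | (src e == i) && (tgt e == j)]|.

Definition trans_mxR (R : pzRingType) (k : nat) (E : finType)
  (src tgt : E -> 'I_k) : 'M[R]_k :=
  map_mx (fun n : nat => n%:R) (trans_mx src tgt).

Definition ceigen (R : rcfType) (k : nat) (A : 'M[R[i]]_k) (mu : R[i]) : bool :=
  eigenvalue A mu.
Definition alg_mult (R : rcfType) (k : nat) (A : 'M[R[i]]_k) (mu : R[i]) : nat :=
  mup mu (char_poly A).
Definition geom_mult (R : rcfType) (k : nat) (A : 'M[R[i]]_k) (mu : R[i]) : nat :=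
  \rank (eigenspace A mu).

Definition spectral_radius (R : rcfType) (k : nat) (A : 'M[R]_k) (lam : R) : Prop :=
  let AC := map_mx (fun x : R => real_complex R x) A in
  (exists2 mu, ceigen AC mu & `|mu| = real_complex R lam) /\
  (forall mu, ceigen AC mu -> `|mu| <= real_complex R lam).

Definition semisimple (R : rcfType) (k : nat) (A : 'M[R]_k) (lam : R) : Prop :=
  let AC := map_mx (fun x : R => real_complex R x) A in
  spectral_radius A lam /\
  (forall mu, ceigen AC mu -> `|mu| = real_complex R lam ->
     geom_mult AC mu = alg_mult AC mu) /\
  (forall mu, ceigen AC mu -> `|mu| = real_complex R lam -> mu = real_complex R lam).

Definition is_path (k : nat) (E : finType) (src tgt : E -> 'I_k) (s : seq E) : bool :=
  match s with
  | [::] => true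
  | e :: s' => path (fun a b => tgt a == src b) e s'
  end.

Definition starts_at (k : nat) (E : finType) (src : E -> 'I_k) (v : 'I_k) (s : seq E) : bool :=
  match s with [::] => true | e :: _ => src e == v end.

Definition paths_from (k : nat) (E : finType) (src tgt : E -> 'I_k) (v : 'I_k) (n : nat)
  : {set n.-tuple E} :=
  [set g : n.-tuple E | is_path src tgt g && starts_at src v g].

Definition large_growth (R : realType) (k : nat) (E : finType) (src tgt : E -> 'I_k)
  (lam : R) (v : 'I_k) : Prop :=
  exists f : nat -> R,
    (fun n => f n / n%:R) @ \oo --> (0 : R) /\
    (\forall n \near \oo, (#|paths_from src tgt v n|)%:R = lam `^ (n%:R + f n)).

Definition markov_law (R : realType) (k : nat) (E : finType) (src tgt : E -> 'I_k)
  (lam : R) (pi rho : 'I_k -> R) (m : nat) (w : m.-tuple E) : R :=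
  if is_path src tgt w then
    (match tval w with [::] => 1 | e :: _ => pi (src e) end) *
    \prod_(e <- tval w) (rho (tgt e) / (lam * rho (src e)))
  else 0.

Definition subpath_law (R : realType) (k : nat) (E : finType) (src tgt : E -> 'I_k)
  (v : 'I_k) (n a : nat) (w : (n - 2 * a).-tuple E) : R :=
  (#|[set g in paths_from src tgt v n | take (n - 2 * a) (drop a (tval g)) == tval w]|)%:R
  / (#|paths_from src tgt v n|)%:R.

Definition tv_dist (R : realType) (T : finType) (p q : T -> R) : R :=
  \big[Num.max/0]_(A : {set T}) `|\sum_(x in A) p x - \sum_(x in A) q x|.

Definition floor_log (R : realType) (n : nat) : nat := Num.truncn (ln (n%:R : R)).

(* Main.v *)
Require Import Defs.
From HB Require Import structures.
From mathcomp Require Import all_boot all_order all_algebra.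
From mathcomp Require Import complex.
From mathcomp Require Import all_classical all_reals all_analysis.
From mathcomp Require Import ring lra zify.
Import Order.TTheory GRing.Theory Num.Theory numFieldNormedType.Exports.
Local Open Scope ring_scope.
Set Implicit Arguments. Unset Strict Implicit. Unset Printing Implicit Defensive.

Fixpoint walkfrom (k : nat) (E : finType) (src tgt : E -> 'I_k) (i : 'I_k) (s : seq E) : bool :=
  match s with [::] => true | e :: s' => (src e == i) && walkfrom src tgt (tgt e) s' end.
Fixpoint endv (k : nat) (E : finType) (tgt : E -> 'I_k) (i : 'I_k) (s : seq E) : 'I_k :=
  match s with [::] => i | e :: s' => endv tgt (tgt e) s' end.

Definition sumseq (V : nmodType) (E : finType) (n : nat) (F : seq E -> V) : V :=
  \sum_(g : n.-tuple E) F g.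

Lemma sumseq0 (V : nmodType) (E : finType) (F : seq E -> V) : sumseq 0 F = F [::].
Proof.
rewrite /sumseq (big_pred1 [tuple]) // => g /=.
by apply/esym/eqP/tuple0.
Qed.

Lemma sumseqS (V : nmodType) (E : finType) n (F : seq E -> V) :
  sumseq n.+1 F = \sum_(e : E) sumseq n (fun s => F (e :: s)).
Proof.
rewrite /sumseq pair_big /=.
rewrite (reindex (fun p : E * n.-tuple E => [tuple of p.1 :: p.2])) //=.
exists (fun t : n.+1.-tuple E => (thead t, [tuple of behead t])).
  by move=> [e t] _ /=; congr pair; apply: val_inj.
move=> t _; apply: val_inj => /=.
by case: t => [[|x s] //].
Qed.

Lemma sumseq_cat (V : nmodType) (E : finType) a b (F : seq E -> V) :
  sumseq (a + b) F = sumseq a (fun s1 => sumseq b (fun s2 => F (s1 ++ s2))).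
Proof.
elim: a F => [|a IH] F; first by rewrite sumseq0.
rewrite addSn !sumseqS; apply: eq_bigr => e _; exact: IH.
Qed.

Lemma eq_sumseq (V : nmodType) (E : finType) n (F G : seq E -> V) :
  (forall s, size s = n -> F s = G s) -> sumseq n F = sumseq n G.
Proof. by move=> H; apply: eq_bigr => g _; apply: H; rewrite size_tuple. Qed.

Lemma sumseq_delta (V : nmodType) (E : finType) n (F : seq E -> V) (w : seq E) :
  size w = n -> sumseq n (fun s => if s == w then F s else 0) = F w.
Proof.
elim: n F w => [|n IH] F [|e w] //= Hw.
- by rewrite sumseq0 eqxx.
- case: Hw => Hw; rewrite sumseqS (bigD1 e) //= big1 ?addr0.
    rewrite -(IH (fun s => F (e :: s))) //; apply: eq_bigr => g _.
    by rewrite eqseq_cons eqxx.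
  move=> e' He'; rewrite /sumseq big1 // => g _.
  by rewrite eqseq_cons (negbTE He').
Qed.

Lemma walkfrom_cat (k : nat) (E : finType) (src tgt : E -> 'I_k) i s1 s2 :
  walkfrom src tgt i (s1 ++ s2) =
  walkfrom src tgt i s1 && walkfrom src tgt (endv tgt i s1) s2.
Proof. by elim: s1 i => [|e s IH] i //=; rewrite IH andbA. Qed.

Lemma endv_cat (k : nat) (E : finType) (tgt : E -> 'I_k) i s1 s2 :
  endv tgt i (s1 ++ s2) = endv tgt (endv tgt i s1) s2.
Proof. by elim: s1 i => [|e s IH] i //=. Qed.

Lemma path_walk (k : nat) (E : finType) (src tgt : E -> 'I_k) e s :
  path (fun a b => tgt a == src b) e s = walkfrom src tgt (tgt e) s.
Proof. by elim: s e => [|e' s IH] e //=; rewrite IH eq_sym. Qed.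

Lemma paths_walk (k : nat) (E : finType) (src tgt : E -> 'I_k) v s :
  is_path src tgt s && starts_at src v s = walkfrom src tgt v s.
Proof. by case: s => [|e s] //=; rewrite path_walk andbC. Qed.

Definition Zs (R : pzRingType) (k : nat) (E : finType) (src tgt : E -> 'I_k)
  (n : nat) (i : 'I_k) (h : 'I_k -> R) : R :=
  sumseq n (fun s => if walkfrom src tgt i s then h (endv tgt i s) else 0).

Lemma ZsS (R : pzRingType) (k : nat) (E : finType) (src tgt : E -> 'I_k) n i h :
  Zs src tgt n.+1 i h = \sum_(e | src e == i) Zs src tgt n (tgt e) h :> R.
Proof.
rewrite /Zs sumseqS [RHS]big_mkcond; apply: eq_bigr => e _ /=.
case: (src e == i) => //=.
by rewrite /sumseq big1.
Qed.

Lemma Zs_mx (R : pzRingType) (k : nat) (E : finType) (src tgt : E -> 'I_k) n p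
  (B : 'M[R]_(k, p)) i c :
  (trans_mxR R src tgt ^+ n *m B) i c = Zs src tgt n i (fun j => B j c).
Proof.
elim: n i => [|n IH] i.
  by rewrite expr0 mul1mx /Zs sumseq0.
rewrite exprS -mulmxE -mulmxA mxE ZsS.
rewrite (partition_big tgt predT) //=; apply: eq_bigr => l _.
rewrite IH /trans_mxR /trans_mx !mxE.
rewrite (eq_bigr (fun _ => Zs src tgt n l (B^~ c))); last by move=> e /andP[_ /eqP->].
rewrite sumr_const mulr_natl; congr (_ *+ _).
apply: eq_card => e /=; by rewrite !unfold_in /= ?asboolb.
Qed.

Lemma sumseq_zero (V : nmodType) (E : finType) n : sumseq n (fun _ : seq E => 0 : V) = 0.
Proof. by rewrite /sumseq big1. Qed.

Lemma sumseq_eq0 (V : nmodType) (E : finType) n (F : seq E -> V) :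
  (forall s, size s = n -> F s = 0) -> sumseq n F = 0.
Proof. by move=> H; rewrite -(sumseq_zero V E n); apply: eq_sumseq. Qed.

Lemma sumseq_mulr (R : pzRingType) (E : finType) n (F : seq E -> R) x :
  sumseq n F * x = sumseq n (fun s => F s * x).
Proof. by rewrite /sumseq mulr_suml. Qed.

Lemma card_paths (R : pzRingType) (k : nat) (E : finType) (src tgt : E -> 'I_k) v n :
  (#|paths_from src tgt v n|)%:R = Zs src tgt n v (fun _ => 1) :> R.
Proof.
rewrite -sumr_const big_mkcond /Zs /sumseq; apply: eq_bigr => g _.
by rewrite /paths_from inE paths_walk.
Qed.

Lemma card_subpath (R : pzRingType) (k : nat) (E : finType) (src tgt : E -> 'I_k) v n m a
  (w : seq E) e w' :
  n = (a + (m + a))%N -> size w = m -> w = e :: w' ->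
  (#|[set g in paths_from src tgt v n | take m (drop a (tval g)) == w]|)%:R =
  (if is_path src tgt w then
     Zs src tgt a v (fun j => (j == src e)%:R) * Zs src tgt a (endv tgt (tgt e) w') (fun _ => 1)
   else 0) :> R.
Proof.
move=> Hn Hw Hwe.
have -> : (#|[set g in paths_from src tgt v n | take m (drop a (tval g)) == w]|)%:R =
  sumseq n (fun s => if walkfrom src tgt v s && (take m (drop a s) == w) then 1 else 0) :> R.
  rewrite -sumr_const big_mkcond /sumseq; apply: eq_bigr => g _.
  by rewrite !inE /paths_from -(paths_walk src tgt v (tval g)).
rewrite Hn sumseq_cat.
under eq_sumseq => s1 Hs1.
  rewrite sumseq_cat.
  under eq_sumseq => s2 Hs2.
    rewrite (_ : sumseq a _ = if s2 == w then
       sumseq a (fun s3 => if walkfrom src tgt v s1 && walkfrom src tgt (endv tgt v s1) s2 &&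
          walkfrom src tgt (endv tgt (endv tgt v s1) s2) s3 then 1 else 0) else 0); last first.
      case: eqP => [->|ne]; last first.
        apply: sumseq_eq0 => s3 _.
        by rewrite drop_size_cat // take_size_cat // (introF eqP ne) andbF.
      apply: eq_sumseq => s3 _.
      by rewrite drop_size_cat // take_size_cat // eqxx andbT !walkfrom_cat ?endv_cat andbA.
    over.
  rewrite (sumseq_delta (fun s2 => sumseq a (fun s3 => if walkfrom src tgt v s1 && walkfrom src tgt (endv tgt v s1) s2 &&
          walkfrom src tgt (endv tgt (endv tgt v s1) s2) s3 then 1 else 0 : R))) //.
  over.
rewrite Hwe /= path_walk.
case: (walkfrom src tgt (tgt e) w'); last first.
  apply: sumseq_eq0 => s1 _.
  by apply: sumseq_eq0 => s3 _; rewrite !andbF.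
rewrite /Zs sumseq_mulr; apply: eq_sumseq => s1 _.
rewrite andbT [in RHS]eq_sym.
case: (walkfrom src tgt v s1) => /=; last first.
  by rewrite mul0r; apply: sumseq_eq0 => s3 _.
case: (src e == endv tgt v s1) => /=; last first.
  by rewrite mul0r; apply: sumseq_eq0 => s3 _.
by rewrite mul1r.
Qed.

Local Open Scope classical_set_scope.
Local Open Scope ring_scope.

Lemma cvg_sumR (R : realType) (I : Type) (r : seq I) (P : pred I) (f : I -> nat -> R) (l : I -> R) :
  (forall i, P i -> f i n @[n --> \oo] --> l i) ->
  \sum_(i <- r | P i) f i n @[n --> \oo] --> \sum_(i <- r | P i) l i.
Proof.
move=> H; elim: r => [|i r IH].
  rewrite big_nil; under eq_cvg do rewrite big_nil; exact: cvg_cst.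
rewrite big_cons; under eq_cvg do rewrite big_cons.
case Pi: (P i) => //.
exact: cvgD (H _ Pi) IH.
Qed.

Lemma Zs_ge0 (R : numDomainType) (k : nat) (E : finType) (src tgt : E -> 'I_k) n i (h : 'I_k -> R) :
  (forall j, 0 <= h j) -> 0 <= Zs src tgt n i h.
Proof.
move=> H; rewrite /Zs /sumseq; apply: sumr_ge0 => g _.
by case: ifP.
Qed.

Lemma eig_rho (R : realType) (k : nat) (E : finType) (src tgt : E -> 'I_k) (lam : R) (rho : 'I_k -> R) :
  0 < lam ->
  (forall i, (fun n => Zs src tgt n i (fun _ => 1) / lam ^+ n) @ \oo --> rho i) ->
  forall i, rho i * lam = \sum_(e | src e == i) rho (tgt e).
Proof.
move=> lam0 H i.
have H1 := H i; rewrite -cvg_shiftS /= in H1.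
have H2 : (fun n => Zs src tgt n.+1 i (fun _ => 1) / lam ^+ n.+1) @ \oo --> (\sum_(e | src e == i) rho (tgt e)) / lam.
  have -> : (fun n => Zs src tgt n.+1 i (fun _ => 1) / lam ^+ n.+1) =
     (fun n => (\sum_(e | src e == i) (Zs src tgt n (tgt e) (fun _ => 1) / lam ^+ n)) * lam^-1).
    apply: funext => n; rewrite ZsS exprSr invfM mulr_suml mulr_suml; apply: eq_bigr => e _.
    by rewrite mulrA.
  apply: cvgMr_tmp.
  by apply: cvg_sumR => e _; apply: H.
have HH := cvg_unique (@Rhausdorff R) H1 H2.
rewrite HH divfK //; exact: lt0r_neq0.
Qed.

Lemma rho_ge0 (R : realType) (k : nat) (E : finType) (src tgt : E -> 'I_k) (lam : R) (rho : 'I_k -> R) h :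
  0 < lam -> (forall j, 0 <= h j) ->
  forall i, (fun n => Zs src tgt n i h / lam ^+ n) @ \oo --> rho i ->
  0 <= rho i.
Proof.
move=> lam0 hh i H; apply: (cvgr_to_ge H); apply: nearW => n.
by apply: divr_ge0; [exact: Zs_ge0 | exact/ltW/exprn_gt0].
Qed.

Lemma prop_rho (R : realType) (k : nat) (E : finType) (src tgt : E -> 'I_k) (lam : R) (rho : 'I_k -> R) :
  (forall i, 0 <= rho i) ->
  (forall i, rho i * lam = \sum_(e | src e == i) rho (tgt e)) ->
  forall e, rho (src e) = 0 -> rho (tgt e) = 0.
Proof.
move=> ge0 eig e H0.
have := eig (src e); rewrite H0 mul0r => /esym/psumr_eq0P.
by move=> /(_ (fun e' _ => ge0 (tgt e')) e (eqxx _)).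
Qed.

Lemma prop_walk (k : nat) (E : finType) (src tgt : E -> 'I_k) (P : 'I_k -> Prop) :
  (forall e, P (src e) -> P (tgt e)) ->
  forall s i, walkfrom src tgt i s -> P i -> P (endv tgt i s).
Proof.
move=> H; elim => [|e s IH] i //= /andP[/eqP Hs Hw] Pi.
by apply: IH => //; apply: H; rewrite Hs.
Qed.

Lemma tele (R : realType) (k : nat) (E : finType) (src tgt : E -> 'I_k) (lam : R) (rho : 'I_k -> R) :
  lam != 0 ->
  (forall e, rho (src e) = 0 -> rho (tgt e) = 0) ->
  forall s i, walkfrom src tgt i s ->
  rho i * \prod_(e <- s) (rho (tgt e) / (lam * rho (src e))) = rho (endv tgt i s) / lam ^+ size s.
Proof.
move=> lam0 Hp; elim => [|e s IH] i /=.
  by rewrite big_nil mulr1 expr0 divr1.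
move=> /andP[/eqP Hs Hw]; rewrite big_cons -Hs.
have [H0|H0] := eqVneq (rho (src e)) 0.
  have := IH _ Hw; rewrite (Hp _ H0) mul0r => /esym/eqP.
  rewrite mulf_eq0 invr_eq0 expf_eq0 (negbTE lam0) andbF orbF => /eqP ->.
  by rewrite H0 !mul0r.
rewrite mulrA [rho (src e) * _]mulrC invfM mulrA -[_ * _ * rho (src e)]mulrA mulVf // mulr1.
rewrite -mulrA [_^-1 * _]mulrC mulrA IH // exprS invfM.
by rewrite mulrAC -mulrA [lam^-1 * _]mulrC.
Qed.

Lemma tv_le (R : realType) (T : finType) (p q : T -> R) :
  tv_dist p q <= \sum_x `|p x - q x|.
Proof.
rewrite /tv_dist; apply: bigmax_le => [|A _]; first by apply: sumr_ge0.
rewrite -sumrB (le_trans (ler_norm_sum _ _ _)) //.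
rewrite [X in _ <= X](bigID (fun x => x \in A)) /= lerDl.
by apply: sumr_ge0.
Qed.

Lemma markov_eq (R : realType) (k : nat) (E : finType) (src tgt : E -> 'I_k) (lam : R)
  (rho u : 'I_k -> R) v0 m (w : m.-tuple E) e w' :
  lam != 0 ->
  (forall e, rho (src e) = 0 -> rho (tgt e) = 0) ->
  tval w = e :: w' ->
  markov_law src tgt lam (fun i => u i * rho i / rho v0) rho w =
  if is_path src tgt w then u (src e) / rho v0 * rho (endv tgt (tgt e) w') / lam ^+ m else 0.
Proof.
move=> lam0 Hp Hw; rewrite /markov_law Hw /=.
case Hpa: (path _ e w') => //.
have := @tele R k E src tgt lam rho lam0 Hp (e :: w') (src e); rewrite /= eqxx -path_walk Hpa => /(_ isT).
have Hm : (size w').+1 = m by rewrite -(size_tuple w) Hw.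
rewrite Hm => HH; rewrite -[RHS]mulrA -HH; ring.
Qed.

Lemma subpath_eq (R : realType) (k : nat) (E : finType) (src tgt : E -> 'I_k) v0 n a
  (w : (n - 2 * a).-tuple E) e w' :
  n = (a + ((n - 2 * a) + a))%N ->
  tval w = e :: w' ->
  subpath_law R src tgt v0 w =
  (if is_path src tgt w then
     Zs src tgt a v0 (fun j => (j == src e)%:R) * Zs src tgt a (endv tgt (tgt e) w') (fun _ => 1)
   else 0) / Zs src tgt n v0 (fun _ => 1).
Proof.
move=> Hn Hw; rewrite /subpath_law card_paths; congr (_ / _).
by rewrite (card_subpath R src tgt v0 Hn (size_tuple w) Hw).
Qed.

Lemma le_sum1 (R : numDomainType) (I : finType) (F : I -> R) i :
  (forall j, 0 <= F j) -> F i <= \sum_j F j.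
Proof. by move=> H; rewrite (bigD1 i) //= lerDl; apply: sumr_ge0. Qed.

Lemma le_sum2 (R : numDomainType) (I J : finType) (F : I -> J -> R) i j :
  (forall i j, 0 <= F i j) -> F i j <= \sum_i \sum_j F i j.
Proof.
move=> H; apply: (le_trans (le_sum1 (F:=F i) j (H i))).
by apply: le_sum1 => i'; apply: sumr_ge0 => j' _.
Qed.

Lemma count_paths (R : pzRingType) (k : nat) (E : finType) (src tgt : E -> 'I_k) m :
  sumseq m.+1 (fun s => if is_path src tgt s then 1 else 0) =
  \sum_e Zs src tgt m (tgt e) (fun _ => 1) :> R.
Proof.
rewrite sumseqS; apply: eq_bigr => e _; apply: eq_sumseq => s _.
by rewrite /= path_walk.
Qed.

Definition Dn (R : realType) (k : nat) (E : finType) (src tgt : E -> 'I_k) (lam : R)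
  (rho u : 'I_k -> R) v0 (n a : nat) : R :=
  \sum_s \sum_t `| u s / rho v0 * rho t -
     (Zs src tgt a v0 (fun j => (j == s)%:R) / lam ^+ a) * (Zs src tgt a t (fun _ => 1) / lam ^+ a)
       / (Zs src tgt n v0 (fun _ => 1) / lam ^+ n) |.

Lemma tv_bound (R : realType) (k : nat) (E : finType) (src tgt : E -> 'I_k) (lam : R)
  (rho u : 'I_k -> R) v0 n a m' :
  0 < lam ->
  (forall e, rho (src e) = 0 -> rho (tgt e) = 0) ->
  n = (a + ((n - 2 * a) + a))%N -> (n - 2 * a)%N = m'.+1 ->
  tv_dist (markov_law src tgt lam (fun i => u i * rho i / rho v0) rho (m := n - 2 * a))
          (subpath_law R src tgt v0 (n := n) (a := a))
  <= Dn src tgt lam rho u v0 n a * (\sum_e Zs src tgt m' (tgt e) (fun _ => 1) / lam ^+ m') / lam.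
Proof.
move=> lam0 Hp Hn Hm.
have lamn0 : lam != 0 by exact: lt0r_neq0.
apply: (le_trans (tv_le _ _)).
set D := Dn _ _ _ _ _ _ _ _.
have D0 : 0 <= D by apply: sumr_ge0 => s _; apply: sumr_ge0.
apply: (@le_trans _ _ (\sum_(w : (n - 2 * a).-tuple E) (if is_path src tgt w then D / lam ^+ (n - 2 * a) else 0))).
  apply: ler_sum => w _.
  case Hw: (tval w) => [|e w'].
    by exfalso; have := size_tuple w; rewrite Hw Hm.
  rewrite (@markov_eq R k E src tgt lam rho u v0 _ w e w' lamn0 Hp Hw) (@subpath_eq R k E src tgt v0 n a w e w' Hn Hw).
  rewrite -Hw; case: (is_path src tgt w); last by rewrite mul0r subr0 normr0.
  set s := src e; set t := endv tgt (tgt e) w'.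
  set A := Zs src tgt a v0 _; set B := Zs src tgt a t _; set C := Zs src tgt n v0 _.
  have -> : A * B / C = (A / lam ^+ a * (B / lam ^+ a) / (C / lam ^+ n)) / lam ^+ (n - 2 * a).
    have [->|C0] := eqVneq C 0; first by rewrite !mul0r invr0 !mulr0 mul0r.
    have Hl : lam ^+ n = lam ^+ a * (lam ^+ (n - 2 * a) * lam ^+ a) by rewrite -!exprD -Hn.
    rewrite Hl; field.
    by rewrite C0 !expf_neq0.
  rewrite -mulrBl normrM [`|lam ^- _|]ger0_norm; last by rewrite invr_ge0 exprn_ge0 // ltW.
  apply: ler_wpM2r; first by rewrite invr_ge0 exprn_ge0 // ltW.
  rewrite /D /Dn /A /B /C.
  pose F := fun (s' : 'I_k) (t' : 'I_k) => `| u s' / rho v0 * rho t' -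
     (Zs src tgt a v0 (fun j => (j == s')%:R) / lam ^+ a) * (Zs src tgt a t' (fun _ => 1) / lam ^+ a)
       / (Zs src tgt n v0 (fun _ => 1) / lam ^+ n) |.
  have := le_sum2 (F:=F) s t (fun _ _ => normr_ge0 _).
  by rewrite /F.
have -> : \sum_(w : (n - 2 * a).-tuple E) (if is_path src tgt w then D / lam ^+ (n - 2 * a) else 0) =
   D / lam ^+ (n - 2 * a) * sumseq (n - 2 * a) (fun s => if is_path src tgt s then 1 else 0).
  rewrite /sumseq mulr_sumr; apply: eq_bigr => w _; by case: ifP; rewrite ?mulr1 ?mulr0.
rewrite Hm count_paths -mulr_suml le_eqVlt; apply/orP; left; apply/eqP.
rewrite exprS; field.
by rewrite lamn0 expf_neq0.
Qed.

Lemma cvg_bound (R : realType) (f : nat -> R) (l : R) : f @ \oo --> l -> exists M, forall n, f n <= M.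
Proof.
move=> /cvgP /cvg_seq_bounded H.
case: H => M [_ HM]; exists (M + 1) => n.
apply: le_trans (ler_norm _) _.
by apply: (HM (M + 1)) => //; rewrite ltrDl.
Qed.

Lemma floor_log_oo (R : realType) : floor_log R n @[n --> \oo] --> \oo.
Proof.
apply/cvgnyPge => A.
near=> n.
rewrite /floor_log.
have HA : 0 <= (A%:R : R) by [].
have Hn : expR A%:R <= (n%:R : R) by near: n; apply: nbhs_infty_ger.
have Hp : 0 < (n%:R : R) by apply: lt_le_trans Hn; exact: expR_gt0.
have Hl : (A%:R : R) <= ln (n%:R : R).
  by rewrite -[X in X <= _]expRK ler_ln // posrE ?expR_gt0.
by rewrite truncn_ge_nat // (le_trans HA Hl).
Unshelve. all: end_near.
Qed.

Lemma floor_log_small (R : realType) : \forall n \near \oo, (2 * floor_log R n < n)%N.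
Proof.
near=> n.
have Hn : (16 <= n)%N by near: n; apply: nbhs_infty_ge.
have Hn' : (16 : R) <= n%:R by rewrite (ler_nat R 16 n).
have Hp : 0 < (n%:R : R) by lra.
have H4 : ln (n%:R : R) = ln 4 + ln (n%:R / 4).
  by rewrite -lnM ?posrE ?divr_gt0 // mulrC divfK.
have H1 : ln (4 : R) < 4 by apply: ln_sublinear.
have H2 : ln (n%:R / 4 : R) < n%:R / 4 by apply: ln_sublinear; rewrite divr_gt0.
have Hl : 0 <= ln (n%:R : R) by apply: ln_ge0; lra.
rewrite -(ltr_nat R) natrM.
apply: (le_lt_trans (y := 2 * ln (n%:R : R))).
  by rewrite ler_pM2l // truncn_le.
lra.
Unshelve. all: end_near.
Qed.

Lemma cvg_term (R : realType) (f g h : nat -> R) (x y z : R) :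
  z != 0 -> f @ \oo --> x -> g @ \oo --> y -> h @ \oo --> z ->
  (fun n => `| x / z * y - f n * g n / h n |) @ \oo --> (0 : R).
Proof.
move=> z0 Hf Hg Hh.
have Hc : (fun n => f n * g n / h n) @ \oo --> x / z * y.
  rewrite mulrAC; exact: (cvgM (cvgM Hf Hg) (cvgV z0 Hh)).
have Hd : (fun n => x / z * y - f n * g n / h n) @ \oo --> x / z * y - x / z * y.
  exact: (cvgB (cvg_cst _) Hc).
have H := cvg_norm Hd; rewrite subrr normr0 in H; exact: H.
Qed.

Lemma Dn_cvg0 (R : realType) (k : nat) (E : finType) (src tgt : E -> 'I_k) (lam : R)
  (rho u : 'I_k -> R) v0 :
  rho v0 != 0 ->
  (forall i, (fun n => Zs src tgt n i (fun _ => 1) / lam ^+ n) @ \oo --> rho i) ->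
  (forall i, (fun n => Zs src tgt n v0 (fun j => (j == i)%:R) / lam ^+ n) @ \oo --> u i) ->
  (fun n => Dn src tgt lam rho u v0 n (floor_log R n)) @ \oo --> (0 : R).
Proof.
move=> r0 Hrho Hu.
have -> : (0 : R) = \sum_(s : 'I_k) \sum_(t : 'I_k) (0 : R) by rewrite big1 // => s _; rewrite big1.
rewrite /Dn; apply: cvg_sumR => s _; apply: cvg_sumR => t _.
apply: cvg_term => //.
- exact: (cvg_comp _ _ (floor_log_oo R) (Hu s)).
- exact: (cvg_comp _ _ (floor_log_oo R) (Hrho t)).
Qed.


Lemma Zs_cat (R : pzRingType) (k : nat) (E : finType) (src tgt : E -> 'I_k) N n i h :
  Zs src tgt (N + n) i h =
  sumseq N (fun s1 => if walkfrom src tgt i s1 then Zs src tgt n (endv tgt i s1) h else 0) :> R.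
Proof.
rewrite /Zs sumseq_cat; apply: eq_sumseq => s1 _.
case Hw: (walkfrom src tgt i s1).
  by apply: eq_sumseq => s2 _; rewrite walkfrom_cat Hw endv_cat.
by apply: sumseq_eq0 => s2 _; rewrite walkfrom_cat Hw.
Qed.

Lemma Zs_submul (R : realType) (k : nat) (E : finType) (src tgt : E -> 'I_k) (rho : 'I_k -> R) N n i :
  (forall e, rho (src e) = 0 -> rho (tgt e) = 0) -> rho i = 0 ->
  Zs src tgt (N + n) i (fun _ => 1 : R) <=
  Zs src tgt N i (fun _ => 1 : R) * \sum_(j | rho j == 0) Zs src tgt n j (fun _ => 1 : R).
Proof.
move=> Hp Hi; rewrite Zs_cat /Zs sumseq_mulr /sumseq; apply: ler_sum => g _.
case Hw: (walkfrom src tgt i g); last by rewrite mul0r.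
rewrite mul1r.
have Hz : rho (endv tgt i g) = 0 by apply: (prop_walk (P := fun j => rho j = 0)) Hw Hi.
rewrite (bigD1 (endv tgt i g)) /=; last by rewrite Hz.
rewrite lerDl; apply: sumr_ge0 => j _; exact: (Zs_ge0 _ _ _ _ (fun _ => ler01)).
Qed.
Lemma rho_v0_neq0 (R : realType) (k : nat) (E : finType) (src tgt : E -> 'I_k) (lam : R)
  (rho : 'I_k -> R) v0 :
  1 < lam -> large_growth src tgt lam v0 ->
  (forall i, (fun n => Zs src tgt n i (fun _ => 1) / lam ^+ n) @ \oo --> rho i) ->
  rho v0 != 0.
Proof.
move=> Hlam [f [Hf HL]] Hr.
have lam0 : 0 < lam by apply: lt_trans Hlam.
have lamn0 : lam != 0 by exact: lt0r_neq0.
apply/negP => /eqP H0.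
have rge0 : forall i, 0 <= rho i by move=> i; apply: (rho_ge0 lam0 _ (Hr i)).
have Hp := prop_rho rge0 (eig_rho lam0 Hr).
pose T n := \sum_(i | rho i == 0) Zs src tgt n i (fun _ => 1) / lam ^+ n.
have Tge0 : forall n, 0 <= T n.
  move=> n; apply: sumr_ge0 => i _; apply: divr_ge0; first exact: (Zs_ge0 _ _ _ _ (fun _ => ler01)).
  exact/ltW/exprn_gt0.
have T0 : T @ \oo --> (0 : R).
  have -> : (0 : R) = \sum_(i | rho i == 0) rho i by rewrite big1 // => i /eqP.
  by apply: cvg_sumR => i _; exact: Hr.
have Tsub : forall N n, T (N + n) <= T N * T n.
  move=> N n; rewrite /T mulr_suml; apply: ler_sum => i /eqP Hi.
  rewrite exprD invfM mulrA.
  have := Zs_submul N n Hp Hi => H.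
  apply: (le_trans (ler_wpM2r _ (ler_wpM2r _ H))); first by rewrite invr_ge0 exprn_ge0 // ltW.
    by rewrite invr_ge0 exprn_ge0 // ltW.
  rewrite mulr_sumr mulr_sumr mulr_suml le_eqVlt; apply/orP; left; apply/eqP.
  by rewrite mulr_suml; apply: eq_bigr => j _; ring.
have [N [N1 TN]] : exists N, (0 < N)%N /\ T N <= 2^-1.
  have H2 : \forall n \near \oo, (0 < n)%N /\ T n <= 2^-1.
    have H := cvgr0_norm_lt T T0 (2^-1) (ltac:(by rewrite invr_gt0)).
    near=> n; split; first by near: n; apply: nbhs_infty_gt.
    have : `|T n| < 2^-1 by near: n; exact: H.
    by rewrite ger0_norm // => /ltW.
  case: H2 => N0 _ HN0; exists N0; exact: (HN0 N0 (leqnn N0)).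
have Tq : forall q, T (q * N)%N <= T 0%N / 2 ^+ q.
  elim => [|q IH]; first by rewrite mul0n expr0 divr1.
  rewrite mulSn; apply: le_trans (Tsub N (q * N)%N) _.
  apply: le_trans (ler_wpM2r (Tge0 _) TN) _.
  apply: le_trans (ler_wpM2l _ IH) _; first by rewrite invr_ge0.
  by rewrite exprS invfM le_eqVlt; apply/orP; left; apply/eqP; ring.
have Zv : forall n, Zs src tgt n v0 (fun _ => 1) / lam ^+ n <= T n.
  move=> n; rewrite /T (bigD1 v0) /=; last by rewrite H0.
  rewrite lerDl; apply: sumr_ge0 => i _; apply: divr_ge0.
    exact: (Zs_ge0 _ _ _ _ (fun _ => ler01)).
  by rewrite exprn_ge0 // ltW.
have T01 : 1 <= T 0%N.
  by have := Zv 0%N; rewrite /Zs sumseq0 /= expr0 divr1.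
have ln2 : 0 < ln (2 : R) by apply: ln_gt0; rewrite ltr1n.
have lnl : 0 < ln lam by apply: ln_gt0.
have N0r : 0 < (N%:R : R) by rewrite ltr0n.
pose e := ln (2 : R) / (2 * N%:R * ln lam).
have e0 : 0 < e by rewrite /e divr_gt0 // !mulr_gt0.
have Hev : \forall n \near \oo, (0 < n)%N /\ `|f n / n%:R| < e /\
    (#|paths_from src tgt v0 n|)%:R = lam `^ (n%:R + f n).
  have H := cvgr0_norm_lt (fun n => f n / n%:R) Hf e e0.
  near=> n; split; first by near: n; apply: nbhs_infty_gt.
  split; first by near: n; exact: H.
  by near: n; exact: HL.
case: Hev => N0 _ HN0.
pose B := 2 * ln (T 0%N) / ln 2.
pose q := (maxn N0 (Num.truncn B)).+1.
have qB : B < q%:R.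
  apply: lt_le_trans (truncnS_gt B) _; rewrite ler_nat ltnS; exact: leq_maxr.
have qN0 : (N0 <= q * N)%N.
  apply: leq_trans (leq_pmulr _ N1); rewrite /q; apply: leqW; exact: leq_maxl.
have [n0 [Hfe Hc]] := HN0 (q * N)%N qN0.
set n := (q * N)%N in n0 Hfe Hc.
have np : 0 < (n%:R : R) by rewrite ltr0n.
have Hle : lam `^ (n%:R + f n) <= lam ^+ n * (T 0%N / 2 ^+ q).
  rewrite -Hc card_paths -ler_pdivrMl ?exprn_gt0 // mulrC.
  exact: le_trans (Zv n) (Tq q).
have Tp : 0 < T 0%N by apply: lt_le_trans T01.
have Hln := Hle; rewrite -ler_ln ?posrE ?powR_gt0 // in Hln; last first.
  apply: lt_le_trans Hle; exact: powR_gt0.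
rewrite ln_powR lnM ?posrE ?exprn_gt0 ?divr_gt0 // lnXn // ln_div ?posrE ?exprn_gt0 // lnXn // in Hln.
have Hf1 : - e < f n / n%:R by move: Hfe; rewrite ltr_norml => /andP[].
have Hf2 : - e * n%:R < f n by rewrite -ltr_pdivlMr.
have Hf3 : - e * n%:R * ln lam < f n * ln lam by rewrite ltr_pM2r.
have He : e * n%:R * ln lam = q%:R * ln 2 / 2.
  rewrite /n natrM /e; field.
  by rewrite !lt0r_neq0.
have HB : 2 * ln (T 0%N) < q%:R * ln 2 by rewrite -ltr_pdivrMr.
rewrite -[ln lam *+ n]mulr_natl -[ln 2 *+ q]mulr_natl mulrDl in Hln.
rewrite !mulNr in Hf3.
move: Hln Hf3 He HB.
move: (f n * ln lam) (n%:R * ln lam) (q%:R * ln 2) (ln (T 0%N)) (e * n%:R * ln lam) => A L X Y W.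
move=> Hln Hf3 He HB.
rewrite He in Hf3.
clear -Hln HB Hf3; lra.
Unshelve. all: end_near.
Qed.

Unset Implicit Arguments.

Theorem lemma6p1 (R : realType) (k : nat) (E : finType) (src tgt : E -> 'I_k)
  (lam : R) (v0 : 'I_k) (rho u : 'I_k -> R) :
  let M := trans_mxR R src tgt in
  semisimple M lam ->
  1 < lam ->
  large_growth src tgt lam v0 ->
  (forall i, (fun n => (M ^+ n *m (const_mx 1 : 'M[R]_(k, 1))) i (ord0 : 'I_1) / lam ^+ n) @ \oo --> rho i) ->
  (forall i, (fun n => (M ^+ n) v0 i / lam ^+ n) @ \oo --> u i) ->
  let pi := fun i => u i * rho i / rho v0 in
  (fun n : nat =>
     tv_dist (markov_law src tgt lam pi rho (m := n - 2 * floor_log R n))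
             (subpath_law R src tgt v0 (n := n) (a := floor_log R n)))
    @ \oo --> (0 : R).
Proof.
move=> M _ Hlam Hlg Hrho Hu pi.
have lam0 : 0 < lam by apply: lt_trans Hlam.
have Hr : forall i, (fun n => Zs src tgt n i (fun _ => 1) / lam ^+ n) @ \oo --> rho i.
  move=> i; have := Hrho i.
  suff -> : (fun n => (M ^+ n *m (const_mx 1 : 'M[R]_(k, 1))) i (ord0 : 'I_1) / lam ^+ n) =
            (fun n => Zs src tgt n i (fun _ => 1) / lam ^+ n) by [].
  apply: funext => n; rewrite /M Zs_mx; congr (_ / _); congr Zs; apply: funext => j.
  by rewrite mxE.
have Hu' : forall i, (fun n => Zs src tgt n v0 (fun j => (j == i)%:R) / lam ^+ n) @ \oo --> u i.
  move=> i; have := Hu i.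
  suff -> : (fun n => (M ^+ n) v0 i / lam ^+ n) =
            (fun n => Zs src tgt n v0 (fun j => (j == i)%:R) / lam ^+ n) by [].
  apply: funext => n; rewrite -[M ^+ n]mulmx1 /M Zs_mx; congr (_ / _); congr Zs; apply: funext => j.
  by rewrite mxE.
have rge0 : forall i, 0 <= rho i by move=> i; apply: (rho_ge0 lam0 _ (Hr i)).
have Hp := prop_rho rge0 (eig_rho lam0 Hr).
have r0 : rho v0 != 0 by apply: (rho_v0_neq0 Hlam Hlg Hr).
have [K HK] : exists K, forall j, \sum_e Zs src tgt j (tgt e) (fun _ => 1) / lam ^+ j <= K.
  apply: cvg_bound; apply: cvg_sumR => e _; exact: Hr.
have HD := Dn_cvg0 r0 Hr Hu'.
apply: (@squeeze_cvgr _ _ _ _ (fun _ => 0) (fun n => Dn src tgt lam rho u v0 n (floor_log R n) * K / lam)); last first.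
- have H2 : (fun n => Dn src tgt lam rho u v0 n (floor_log R n) * K / lam) @ \oo --> 0 * K / lam.
    exact: (cvgM (cvgM HD (cvg_cst K)) (cvg_cst _)).
  by rewrite !mul0r in H2.
- exact: cvg_cst.
near=> n.
apply/andP; split.
  rewrite /tv_dist; apply: (le_trans _ (le_bigmax _ _ finset.set0)).
  by rewrite !big_set0 subrr normr0.
have Hs : (2 * floor_log R n < n)%N by near: n; apply: floor_log_small.
set a := floor_log R n.
have Hn : n = (a + ((n - 2 * a) + a))%N by rewrite /a; lia.
have Hm : (n - 2 * a)%N = (n - 2 * a).-1.+1 by rewrite /a; lia.
apply: le_trans (tv_bound u v0 lam0 Hp Hn Hm) _.
rewrite ler_pM2r ?invr_gt0 //.
apply: ler_wpM2l => //.
by apply: sumr_ge0 => s _; apply: sumr_ge0 => t _.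
Unshelve. all: end_near.
Qed.
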